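(* Let $k$ be a positive integer and $\alpha \in (0,1]$. If $\frac{\alpha}{1 - \ln \alpha} \geq \frac{2}{k + 1}$, then in any election there exists an $\alpha$-undominated committee of size $k$.
   Context: An election consists of a finite set $V$ of $n$ voters, a finite set $C$ of $m$ candidates, and for each voter $v$ a strict linear order $\succ_v$ on $C$ (her preference ranking). A committee is a subset $S \subseteq C$. For a candidate $a$ and committee $S$, write $a \succ_v S$ if $v$ prefers $a$ to every member of $S$, and let $\frac1n|a \succ S| = \frac1n|\{v \in V : a \succ_v S\}|$ (this is $0$ if $a \in S$). A committee $S$ is $\alpha$-undominated if for every candidate $a \in C$, $\frac1n|a \succ S| < \alpha$. *)

(* Defs.v *)
From HB Require Import structures.
From mathcomp Require Import all_boot all_order all_algebra.
From mathcomp Require Import all_classical all_reals all_analysis.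
Set Implicit Arguments. Unset Strict Implicit. Unset Printing Implicit Defensive.
Import Order.TTheory GRing.Theory Num.Theory.
Local Open Scope ring_scope.

(* A strict linear order on a finite type, given as a boolean relation
   [lt a b] meaning "a is strictly preferred to b". *)
Definition strict_linear_order (C : finType) (lt : rel C) : Prop :=
  [/\ irreflexive lt, transitive lt &
      (forall a b : C, a != b -> lt a b || lt b a)].

Definition election (V C : finType) (pref : V -> rel C) : Prop :=
  forall v : V, strict_linear_order (pref v).

Definition prefers_to_all (C : finType) (lt : rel C) (a : C) (S : {set C}) : bool :=
  [forall b in S, lt a b].

Definition dom_frac (R : realType) (V C : finType) (pref : V -> rel C)
    (a : C) (S : {set C}) : R :=
  #|[set v : V | prefers_to_all (pref v) a S]|%:R / #|V|%:R.

Definition undominated (R : realType) (V C : finType) (pref : V -> rel C)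
    (alpha : R) (S : {set C}) : Prop :=
  forall a : C, @dom_frac R V C pref a S < alpha.

(* Main.v *)
Require Import Defs.
From HB Require Import structures.
From mathcomp Require Import all_boot all_order all_algebra.
From mathcomp Require Import all_classical all_reals all_analysis.
From mathcomp Require Import ring lra zify.
Set Implicit Arguments. Unset Strict Implicit. Unset Printing Implicit Defensive.
Import Order.TTheory GRing.Theory Num.Theory.
Local Open Scope ring_scope.

Lemma sum_delta (R : realFieldType) (I : finType) (i0 : I) (u : R) (F : I -> R) :
  \sum_i (if i == i0 then u else 0) * F i = u * F i0.
Proof.
rewrite (bigD1 i0) //= eqxx big1 ?addr0 // => i /negbTE ->; by rewrite mul0r.
Qed.

Lemma sep_lemma (R : realFieldType) (I : finType) (P N : pred I) (lo hi : I -> R) :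
  (forall i j, P i -> N j -> lo j <= hi i) ->
  exists z, (forall j, N j -> lo j <= z) /\ (forall i, P i -> z <= hi i).
Proof.
move=> H.
case: (pickP N) => [j0 Nj0|N0].
  case: (arg_maxP lo Nj0) => jm Njm Hjm.
  exists (lo jm); split => [j Nj|i Pi]; [exact: Hjm| exact: H].
case: (pickP P) => [i0 Pi0|P0].
  case: (arg_minP hi Pi0) => im Pim Him.
  exists (hi im); split => [j Nj|i Pi]; [by rewrite N0 in Nj | exact: Him].
exists 0; split => [j|i]; [by rewrite N0| by rewrite P0].
Qed.

Lemma ratio_le (R : realFieldType) (ri rj ai aj : R) :
  0 < ai -> aj < 0 -> 0 <= - aj * ri + ai * rj -> rj / aj <= ri / ai.
Proof.
move=> hi hj h.
have ai0 : ai != 0 by rewrite gt_eqF.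
have aj0 : aj != 0 by rewrite lt_eqF.
rewrite -subr_ge0.
have -> : ri / ai - rj / aj = (- aj * ri + ai * rj) / (ai * - aj) by field; rewrite ?ai0 ?aj0 ?oppr_eq0 ?mulf_neq0 ?aj0.
by apply: divr_ge0 => //; apply: mulr_ge0; rewrite ?oppr_ge0; apply: ltW.
Qed.

Definition fm_coef (R : realFieldType) (I : finType) (a : I -> R) (i' : I + I * I) (i : I) : R :=
  match i' with
  | inl i0 => if (a i0 == 0) && (i == i0) then 1 else 0
  | inr (i0, j0) => if (0 < a i0) && (a j0 < 0) then
       (if i == i0 then - a j0 else 0) + (if i == j0 then a i0 else 0) else 0
  end.

Lemma fm_coef_ge0 (R : realFieldType) (I : finType) (a : I -> R) i' i : 0 <= fm_coef a i' i.
Proof.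
case: i' => [i0|[i0 j0]] /=; first by case: ifP.
case: ifP => // /andP[h1 h2].
by apply: addr_ge0; case: ifP => //; rewrite ?oppr_ge0 ?ltW.
Qed.

Lemma fm_coef_sum (R : realFieldType) (I : finType) (a : I -> R) i' (F : I -> R) :
  \sum_i fm_coef a i' i * F i =
  match i' with
  | inl i0 => if a i0 == 0 then F i0 else 0
  | inr (i0, j0) => if (0 < a i0) && (a j0 < 0) then - a j0 * F i0 + a i0 * F j0 else 0
  end.
Proof.
case: i' => [i0|[i0 j0]] /=.
  case: eqP => _ /=.
    by rewrite -[F i0]mul1r -(sum_delta i0 1 F); apply: eq_bigr => i _.
  by rewrite big1 // => i _; rewrite mul0r.
case: ifP => _; last by rewrite big1 // => i _; rewrite mul0r.
rewrite -(sum_delta i0 (- a j0) F) -(sum_delta j0 (a i0) F) -big_split /=.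
by apply: eq_bigr => i _; rewrite mulrDl.
Qed.

Lemma fm_coef_last (R : realFieldType) (I : finType) (a : I -> R) i' :
  \sum_i fm_coef a i' i * a i = 0.
Proof.
rewrite fm_coef_sum; case: i' => [i0|[i0 j0]].
  by case: eqP.
by case: ifP => // _; rewrite mulNr [a j0 * _]mulrC addNr.
Qed.

Lemma farkas (R : realFieldType) (d : nat) : forall (I : finType) (A : I -> 'I_d -> R) (b : I -> R),
  (exists x : 'I_d -> R, forall i, \sum_k A i k * x k <= b i) \/
  (exists y : I -> R, (forall i, 0 <= y i) /\ (forall k, \sum_i y i * A i k = 0) /\ \sum_i y i * b i < 0).
Proof.
elim: d => [|d IH] I A b.
  case: (boolP [forall i, 0 <= b i]) => H.
    by left; exists (fun _ => 0) => i; rewrite big_ord0; exact: (forallP H i).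
  right; move/forallPn: H => [i0 Hi0].
  exists (fun i => if i == i0 then 1 else 0); split; first by move=> i; case: ifP.
  split; first by case.
  by rewrite sum_delta mul1r ltNge.
pose a i := A i ord_max.
pose A' i (k : 'I_d) := A i (widen_ord (leqnSn d) k).
pose B i' k := \sum_i fm_coef a i' i * A' i k.
pose c i' := \sum_i fm_coef a i' i * b i.
case: (IH _ B c) => [[x' Hx']|[y' [y'0 [y'A y'b]]]].
- pose r i := b i - \sum_k A' i k * x' k.
  have Hr : forall i', 0 <= \sum_i fm_coef a i' i * r i.
    move=> i'; have := Hx' i'; rewrite /B /c.
    under eq_bigr => k _ do rewrite mulr_suml.
    rewrite exchange_big /= -subr_ge0 -sumrB.
    by congr (0 <= _); apply: eq_bigr => i _; rewrite /r mulrBr; congr (_ - _); rewrite mulr_sumr;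
       apply: eq_bigr => k _; rewrite mulrA.
  have Hsep : forall i j, 0 < a i -> a j < 0 -> r j / a j <= r i / a i.
    move=> i j Pi Nj; have := Hr (inr (i, j)); rewrite fm_coef_sum Pi Nj /=.
    move=> h.
    have aj : 0 < - a j by rewrite oppr_gt0.
    exact: ratio_le.
  have [z [Hz1 Hz2]] := sep_lemma Hsep.
  pose x (k : 'I_d.+1) := if insub (val k) is Some k' then x' k' else z.
  left; exists x => i.
  rewrite big_ord_recr /=.
  have -> : x ord_max = z by rewrite /x insubF //= ltnn.
  have -> : \sum_(k < d) A i (widen_ord (leqnSn d) k) * x (widen_ord (leqnSn d) k)
            = \sum_k A' i k * x' k.
    apply: eq_bigr => k _; rewrite /x /A' /=.
    by rewrite (insubT (fun m : nat => (m < d)%N) (ltn_ord k)) /=; congr (_ * x' _); apply: val_inj.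
  rewrite -lerBrDl -/(a i) -/(r i).
  case: (ltrgtP (a i) 0) => ha.
  - have := Hz1 i ha; rewrite /= ler_ndivrMr // => h; by rewrite mulrC.
  - have := Hz2 i ha; rewrite /= ler_pdivlMr // => h; by rewrite mulrC.
  - have := Hr (inl i); rewrite fm_coef_sum ha eqxx => h; by rewrite mul0r.
- right.
  pose y i := \sum_i' y' i' * fm_coef a i' i.
  exists y; split.
    by move=> i; apply: sumr_ge0 => i' _; apply: mulr_ge0 => //; apply: fm_coef_ge0.
  have key : forall F : I -> R, \sum_i y i * F i = \sum_i' y' i' * \sum_i fm_coef a i' i * F i.
    move=> F; rewrite /y.
    under eq_bigr => i _ do rewrite mulr_suml.
    rewrite exchange_big /=; apply: eq_bigr => i' _.
    by rewrite mulr_sumr; apply: eq_bigr => i _; rewrite mulrA.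
  split; last by rewrite key.
  move=> k; rewrite key.
  case: (unliftP ord_max k) => [k'|] ->.
    rewrite -[RHS](y'A k'); apply: eq_bigr => i' _; rewrite /B /A'; congr (_ * _).
    apply: eq_bigr => i _; congr (_ * A i _).
    by apply: val_inj => /=; rewrite /bump leqNgt ltn_ord.
  by rewrite big1 // => i' _; rewrite fm_coef_last mulr0.
Qed.

Lemma sum_enum (R : realFieldType) (I : finType) (F : I -> R) :
  \sum_(k < #|I|) F (enum_val k) = \sum_i F i.
Proof.
by rewrite (big_enum_val (A := I)); apply: eq_bigr.
Qed.

Lemma sum_rank (R : realFieldType) (I : finType) (G : 'I_#|I| -> R) :
  \sum_(k < #|I|) G k = \sum_i G (enum_rank i).
Proof.
rewrite -(sum_enum (fun i => G (enum_rank i))).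
by apply: eq_bigr => k _; rewrite enum_valK.
Qed.

Lemma minimax (R : realFieldType) (I J : finType) (M : I -> J -> R) (V : R) (i0 : I) :
  (forall y : J -> R, (forall j, 0 <= y j) -> \sum_j y j = 1 ->
     exists x : I -> R, [/\ (forall i, 0 <= x i), \sum_i x i = 1 &
                         \sum_i \sum_j x i * y j * M i j <= V]) ->
  exists x : I -> R, [/\ (forall i, 0 <= x i), \sum_i x i = 1 &
                         forall j, \sum_i x i * M i j <= V].
Proof.
move=> Hyp.
pose K := ((J + I) + bool)%type.
pose A (kk : K) (k : 'I_#|I|) : R :=
  match kk with
  | inl (inl j) => M (enum_val k) j
  | inl (inr i) => if enum_val k == i then -1 else 0
  | inr true => 1
  | inr false => -1
  end.
pose b (kk : K) : R :=
  match kk with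
  | inl (inl j) => V
  | inl (inr i) => 0
  | inr true => 1
  | inr false => -1
  end.
case: (farkas A b) => [[x' Hx]|[y [y0 [yA yb]]]].
- exists (fun i => x' (enum_rank i)); split.
  + move=> i; have := Hx (inl (inr i)); rewrite /A /b sum_rank.
    under eq_bigr => k _ do rewrite enum_rankK.
    by rewrite sum_delta mulN1r oppr_le0.
  + apply/eqP; rewrite eq_le; apply/andP; split.
      have := Hx (inr true); rewrite /A /b sum_rank.
      by under eq_bigr => k _ do rewrite mul1r.
    have := Hx (inr false); rewrite /A /b sum_rank.
    under eq_bigr => k _ do rewrite mulN1r.
    by rewrite sumrN lerN2.
  + move=> j; have := Hx (inl (inl j)); rewrite /A /b sum_rank.
    under eq_bigr => k _ do rewrite enum_rankK.
    by under eq_bigr => i _ do rewrite mulrC.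
- exfalso.
  pose yj j := y (inl (inl j)).
  pose Y := \sum_j yj j.
  pose sigma := y (inr false) - y (inr true).
  have Hcol : forall i, sigma <= \sum_j yj j * M i j.
    move=> i; have := yA (enum_rank i).
    rewrite big_sumType big_sumType big_bool /= /A enum_rankK.
    rewrite [X in _ + X + _](bigD1 i) //= eqxx [X in _ + (_ + X) + _]big1; last first.
      by move=> i1 hi; rewrite eq_sym (negbTE hi) mulr0.
    move=> h; rewrite /sigma /yj.
    have : \sum_j y (inl (inl j)) * M i j = y (inl (inr i)) - y (inr true) + y (inr false) by lra.
    move=> ->; have := y0 (inl (inr i)); lra.
  have Hb : V * Y < sigma.
    move: yb; rewrite big_sumType big_sumType big_bool /= /b.
    rewrite [X in _ + X + _]big1 ?addr0; last by move=> i _; rewrite mulr0.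
    rewrite /Y /yj /sigma mulr_sumr.
    under [X in X + _ < 0 -> _]eq_bigr => j _ do rewrite mulrC.
    lra.
  have Y0 : 0 <= Y by apply: sumr_ge0 => j _; exact: y0.
  case: (eqVneq Y 0) => [HY|HY].
    have yj0 : forall j, yj j = 0.
      move=> j; have h := psumr_eq0P (fun j _ => y0 (inl (inl j))) HY.
      exact: h.
    have := Hcol i0; rewrite big1 => [|j _]; last by rewrite yj0 mul0r.
    move: Hb; rewrite HY mulr0; lra.
  have Ypos : 0 < Y by rewrite lt_def HY Y0.
  have s1 : \sum_j (yj j / Y) = 1 by rewrite -mulr_suml mulfV.
  have [x [x0 x1 xV]] := Hyp (fun j => yj j / Y) (fun j => divr_ge0 (y0 _) Y0) s1.
  have : sigma / Y <= \sum_i \sum_j x i * (yj j / Y) * M i j.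
    rewrite -[sigma / Y]mul1r -x1 mulr_suml; apply: ler_sum => i _.
    under eq_bigr => j _ do rewrite -mulrA.
    rewrite -mulr_sumr; apply: ler_wpM2l => //.
    under eq_bigr => j _ do rewrite mulrAC.
    by rewrite -mulr_suml ler_pM2r ?invr_gt0.
  have : V < sigma / Y by rewrite ltr_pdivlMr // mulrC.
  lra.
Qed.

Lemma antisym_ind (C : finType) (lt : rel C) (R : realFieldType) a b :
  irreflexive lt -> transitive lt -> (lt a b)%:R + (lt b a)%:R <= 1 :> R.
Proof.
move=> irr tr.
case h1: (lt a b); case h2: (lt b a) => //=; rewrite ?addr0 ?add0r //.
by have := tr _ _ _ h1 h2; rewrite irr.
Qed.

Lemma voter_bound (R : realFieldType) (C : finType) (lt : rel C) (x Z : C -> R) :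
  irreflexive lt -> transitive lt ->
  (forall a, 0 <= Z a) -> (forall a, Z a <= x a) -> \sum_b x b = 1 ->
  \sum_a Z a * (\sum_b x b * (lt a b)%:R) <= \sum_a Z a - (\sum_a Z a) ^+ 2 / 2.
Proof.
move=> irr tr Z0 Zx x1.
pose W := \sum_a \sum_b Z a * Z b * (1 - (lt a b)%:R).
have h1 : \sum_a Z a - \sum_a Z a * (\sum_b x b * (lt a b)%:R)
          = \sum_a \sum_b Z a * x b * (1 - (lt a b)%:R).
  rewrite -sumrB; apply: eq_bigr => a _.
  symmetry; under eq_bigr => b _ do rewrite mulrBr mulr1.
  rewrite sumrB -mulr_sumr x1 mulr1 mulr_sumr; congr (_ - _).
  by apply: eq_bigr => b _; rewrite mulrA.
have h2 : W <= \sum_a \sum_b Z a * x b * (1 - (lt a b)%:R).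
  apply: ler_sum => a _; apply: ler_sum => b _.
  have i0 : 0 <= 1 - (lt a b)%:R :> R by case: (lt a b); rewrite ?subrr ?subr0.
  by apply: ler_wpM2r => //; apply: ler_wpM2l.
have h3 : (\sum_a Z a) ^+ 2 <= 2 * W.
  have -> : 2 * W = W + \sum_a \sum_b Z a * Z b * (1 - (lt b a)%:R).
    rewrite mulr2n mulrDl mul1r; congr (_ + _).
    rewrite /W exchange_big /=; apply: eq_bigr => a _; apply: eq_bigr => b _.
    by rewrite [Z b * Z a]mulrC.
  rewrite /W -big_split /= expr2 mulr_suml; apply: ler_sum => a _.
  rewrite -big_split /= mulr_sumr; apply: ler_sum => b _.
  rewrite -mulrDr -[X in X <= _]mulr1; apply: ler_wpM2l; first by apply: mulr_ge0.
  have := antisym_ind R a b irr tr; lra.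
have : (\sum_a Z a) ^+ 2 / 2 <= W by rewrite ler_pdivrMr // mulrC.
lra.
Qed.

Lemma cauchy_n (R : realFieldType) (V : finType) (mu : V -> R) :
  (0 < #|V|)%N -> (\sum_v mu v) ^+ 2 / #|V|%:R <= \sum_v mu v ^+ 2.
Proof.
move=> hn.
have N0 : 0 < #|V|%:R :> R by rewrite ltr0n.
pose m := (\sum_v mu v) / #|V|%:R.
have : 0 <= \sum_v (mu v - m) ^+ 2 by apply: sumr_ge0 => v _; apply: sqr_ge0.
under eq_bigr => v _ do rewrite sqrrB.
rewrite big_split /= sumrB sumr_const.
have -> : \sum_v mu v * m *+ 2 = (\sum_v mu v) * m *+ 2.
  by rewrite sumrMnl mulr_suml.
have -> : (\sum_v mu v) ^+ 2 / #|V|%:R = (\sum_v mu v) * m by rewrite /m expr2 mulrA.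
rewrite -mulr_natr.
have -> : m ^+ 2 *+ #|V| = (\sum_v mu v) * m.
  by rewrite /m -mulr_natr; field; rewrite gt_eqF.
lra.
Qed.

Lemma ind_mem_sum (R : realFieldType) (V : finType) (T : {set V}) :
  \sum_v (v \in T)%:R = #|T|%:R :> R.
Proof.
rewrite (bigID (fun v => v \in T)) /= [X in _ + X]big1 ?addr0; last by move=> v /negbTE ->.
by rewrite -sum1_card natr_sum; apply: eq_bigr => v ->.
Qed.

Lemma frac_lemma (R : realType) (V C : finType) (pref : V -> rel C) (t : nat) (c0 : C) :
  election pref -> (0 < #|V|)%N ->
  exists p : C -> R, [/\ (forall c, 0 <= p c), \sum_c p c = 1 &
    forall a (T : {set V}), #|T| = t ->
      \sum_(v in T) \sum_b p b * (pref v a b)%:R <= t%:R - t%:R ^+ 2 / (2 * #|V|%:R)].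
Proof.
move=> el hn.
pose St := {T : {set V} | #|T| == t}.
pose M (b : C) (j : C * St) : R := \sum_(v in val j.2) (pref v j.1 b)%:R.
pose V0 : R := t%:R - t%:R ^+ 2 / (2 * #|V|%:R).
suff Hy : forall y : C * St -> R, (forall j, 0 <= y j) -> \sum_j y j = 1 ->
     exists x : C -> R, [/\ (forall i, 0 <= x i), \sum_i x i = 1 &
                         \sum_i \sum_j x i * y j * M i j <= V0].
  have [x [x0 x1 xV]] := minimax c0 Hy.
  exists x; split => // a T hT.
  have hT' : #|T| == t by apply/eqP.
  have := xV (a, exist _ T hT'); rewrite /M /=.
  under eq_bigr => b _ do rewrite mulr_sumr.
  by rewrite exchange_big.
move=> y y0 y1.
pose x b := \sum_(T : St) y (b, T).
exists x; split.
- by move=> b; apply: sumr_ge0 => T _; exact: y0.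
- by rewrite /x pair_big /=; rewrite -y1; apply: eq_bigr => [[a T]].
pose Z a v := \sum_(T : St) y (a, T) * (v \in val T)%:R.
pose q v a := \sum_b x b * (pref v a b)%:R.
pose mu v := \sum_a Z a v.
have E1 : \sum_b \sum_j x b * y j * M b j = \sum_v \sum_a Z a v * q v a.
  transitivity (\sum_(p : C * St) \sum_v \sum_b y p * x b * ((v \in val p.2)%:R * (pref v p.1 b)%:R)).
    rewrite exchange_big /=; apply: eq_bigr => p _.
    rewrite exchange_big /=; apply: eq_bigr => b _.
    rewrite /M big_mkcond /= mulr_sumr; apply: eq_bigr => v _.
    by case: (v \in _); rewrite ?mul1r ?mul0r ?mulr0 // [x b * _]mulrC.
  symmetry.
  transitivity (\sum_a \sum_(T : St) \sum_v \sum_b y (a, T) * x b * ((v \in val T)%:R * (pref v a b)%:R)); last first.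
    by rewrite pair_big; apply: eq_bigr => [[a T]] _.
  rewrite exchange_big /=; apply: eq_bigr => a _.
  under eq_bigr => v _ do rewrite /Z /q mulr_suml.
  rewrite exchange_big /=; apply: eq_bigr => T _; apply: eq_bigr => v _.
  rewrite mulr_sumr; apply: eq_bigr => b _ /=.
  by rewrite mulrCA !mulrA [x b * _]mulrC.
have E2 : forall v, \sum_a Z a v * q v a <= mu v - mu v ^+ 2 / 2.
  move=> v; have [irr tr _] := el v.
  apply: voter_bound => //.
  - by move=> a; apply: sumr_ge0 => T _; apply: mulr_ge0 => //; rewrite ler0n.
  - move=> a; apply: ler_sum => T _; rewrite -[X in _ <= X]mulr1; apply: ler_wpM2l => //.
    by case: (v \in _).
  - by rewrite /x pair_big /=; rewrite -y1; apply: eq_bigr => [[a T]].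
have E3 : \sum_v mu v = t%:R.
  rewrite /mu /Z exchange_big /=.
  under eq_bigr => a _ do rewrite exchange_big /=.
  transitivity (\sum_(j : C * St) y j * t%:R); last by rewrite -mulr_suml y1 mul1r.
  rewrite pair_big; apply: eq_bigr => [[a T]] _ /=.
  rewrite -mulr_sumr ind_mem_sum.
  by have := valP T; move/eqP => ->.
have E4 := cauchy_n mu hn.
rewrite E1.
apply: (le_trans (ler_sum _ (fun v _ => E2 v))).
rewrite sumrB -mulr_suml E3 /V0.
rewrite E3 in E4.
have N0 : 0 < #|V|%:R :> R by rewrite ltr0n.
rewrite invfM mulrA.
have : t%:R ^+ 2 / #|V|%:R / 2 <= (\sum_v mu v ^+ 2) / 2 :> R.
  by rewrite ler_pM2r.
lra.
Qed.

Lemma exists_min (C : finType) (lt : rel C) (S : {set C}) :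
  irreflexive lt -> transitive lt -> (0 < #|S|)%N ->
  exists2 s, s \in S & forall s', s' \in S -> ~~ lt s' s.
Proof.
move=> irr tr; rewrite card_gt0 => /set0Pn [s0 Hs0].
pose rk c := #|[set c' | lt c' c]|.
have rk_lt : forall c c', lt c' c -> (rk c' < rk c)%N.
  move=> c c' h; apply: proper_card; apply/properP; split.
    by apply/fintype.subsetP => e; rewrite !inE => h'; exact: tr h' h.
  by exists c'; rewrite !inE ?irr.
case: (arg_minnP rk Hs0) => s Hs Hmin.
exists s => // s' Hs'; apply/negP => h.
by have := Hmin _ Hs'; rewrite leqNgt rk_lt.
Qed.

Lemma telescope_set (R : realFieldType) (C : finType) (lt : rel C) (p : C -> R) (H : R -> R) :
  irreflexive lt -> transitive lt -> (forall a b, a != b -> lt a b || lt b a) ->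
  forall D : {set C},
  \sum_(b in D) (H (\sum_(c in D | lt c b) p c + p b) - H (\sum_(c in D | lt c b) p c))
   = H (\sum_(c in D) p c) - H 0.
Proof.
move=> irr tr tot D.
move Hn : #|D| => n; elim: n D Hn => [|n IH] D Hn.
  move/eqP: Hn; rewrite cards_eq0 => /eqP ->.
  by rewrite !big_set0 subrr.
have D0 : (0 < #|D|)%N by rewrite Hn.
have [m Hm Hbot] := exists_min (lt := fun x y => lt y x) irr (fun a b c h1 h2 => tr _ _ _ h2 h1) D0.
have HD' : #|D :\ m| = n by rewrite (cardsD1 m D) Hm in Hn; case: Hn.
rewrite (bigD1 m) //= [in RHS](bigD1 m) //=.
have E1 : \sum_(c in D | lt c m) p c = \sum_(c in D :\ m) p c.
  apply: eq_bigl => c; rewrite !inE.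
  case: (eqVneq c m) => [->|hcm] /=; first by rewrite irr andbF.
  case hc: (c \in D) => //=.
  by move: (tot _ _ hcm) (Hbot c hc) => /=; case: (lt m c); rewrite ?orbF.
have E2 : \sum_(i in D | i != m) (H (\sum_(c in D | lt c i) p c + p i) - H (\sum_(c in D | lt c i) p c))
   = \sum_(i in D :\ m) (H (\sum_(c in D :\ m | lt c i) p c + p i) - H (\sum_(c in D :\ m | lt c i) p c)).
  apply: eq_big => [i|i Hi]; first by rewrite !inE andbC.
  have -> : \sum_(c in D | lt c i) p c = \sum_(c in D :\ m | lt c i) p c; last by [].
  apply: eq_bigl => c; rewrite !inE.
  case: (eqVneq c m) => [->|hcm] //=.
  by rewrite Hm /=; apply/negbTE; apply: Hbot; case/andP: Hi.
rewrite E1 E2 IH //.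
have -> : \sum_(i in D | i != m) p i = \sum_(c in D :\ m) p c by apply: eq_bigl => c; rewrite !inE andbC.
by rewrite [p m + _]addrC; lra.
Qed.

Lemma fk_ge0 (R : realFieldType) (k : nat) (a b : R) : 0 <= b -> b <= a ->
  0 <= a ^+ k.+1 - k.+1%:R * a * b ^+ k + k%:R * b ^+ k.+1.
Proof.
move=> b0 ba; elim: k => [|k IH].
  by rewrite expr1 expr0 mulr1 mul1r subrr mul0r addr0.
have -> : a ^+ k.+2 - k.+2%:R * a * b ^+ k.+1 + k.+1%:R * b ^+ k.+2
  = a * (a ^+ k.+1 - k.+1%:R * a * b ^+ k + k%:R * b ^+ k.+1) + k.+1%:R * b ^+ k * (a - b) ^+ 2.
  rewrite !exprS -!natr1; ring.
apply: addr_ge0; first by apply: mulr_ge0 => //; apply: le_trans ba.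
by apply: mulr_ge0; [apply: mulr_ge0; [rewrite ler0n|apply: exprn_ge0]|apply: sqr_ge0].
Qed.

Definition hpol (R : realFieldType) (k : nat) (d u : R) : R :=
  d ^+ k.+1 / k.+1%:R - d * u ^+ k + k%:R * u ^+ k.+1 / k.+1%:R.

Definition Hf (R : realFieldType) (k : nat) (d u : R) : R := hpol k d (Num.min u d).

Lemma hpol_ge0 (R : realFieldType) (k : nat) (d u : R) : 0 <= u -> u <= d -> 0 <= hpol k d u.
Proof.
move=> u0 ud; have := fk_ge0 k u0 ud.
have K0 : 0 < k.+1%:R :> R by rewrite ltr0n.
have -> : hpol k d u = (d ^+ k.+1 - k.+1%:R * d * u ^+ k + k%:R * u ^+ k.+1) / k.+1%:R.
  by rewrite /hpol; field; rewrite gt_eqF.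
by move=> h; apply: divr_ge0 => //; apply: ltW.
Qed.

Lemma hpol_dd (R : realFieldType) (k : nat) (d : R) : hpol k d d = 0.
Proof.
rewrite /hpol.
have K0 : 0 < k.+1%:R :> R by rewrite ltr0n.
rewrite !exprS -[k.+1%:R]natr1; field; rewrite natr1 gt_eqF //.
Qed.

Lemma per_b (R : realFieldType) (k : nat) (d a b : R) : 0 <= b -> b <= a -> 0 <= d ->
  Num.max (d - a) 0 * (a ^+ k - b ^+ k) <= Hf k d b - Hf k d a.
Proof.
move=> b0 ba d0.
case: (leP d a) => da.
  have -> : Num.max (d - a) 0 = 0 by apply/max_idPr; rewrite subr_le0.
  rewrite mul0r /Hf.
  have -> : Num.min a d = d by apply/min_idPr.
  rewrite hpol_dd subr0.
  case: (leP b d) => bd.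
    by apply: hpol_ge0.
  by rewrite hpol_dd.
have -> : Num.max (d - a) 0 = d - a by apply/max_idPl; rewrite subr_ge0 ltW.
rewrite /Hf.
have -> : Num.min a d = a by apply/min_idPl; apply: ltW.
have -> : Num.min b d = b by apply/min_idPl; apply: le_trans ba (ltW da).
have := fk_ge0 k b0 ba.
have K0 : 0 < k.+1%:R :> R by rewrite ltr0n.
rewrite /hpol.
set A1 := a ^+ k; set B1 := b ^+ k.
have -> : a ^+ k.+1 = a * A1 by rewrite exprS.
have -> : b ^+ k.+1 = b * B1 by rewrite exprS.
move=> h.
rewrite -subr_ge0.
have -> : d ^+ k.+1 / k.+1%:R - d * B1 + k%:R * (b * B1) / k.+1%:R -
  (d ^+ k.+1 / k.+1%:R - d * A1 + k%:R * (a * A1) / k.+1%:R) - (d - a) * (A1 - B1)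
  = (a * A1 - k.+1%:R * a * B1 + k%:R * (b * B1)) / k.+1%:R.
  by field; rewrite ?nat1r ?natr1 ?gt_eqF.
by apply: divr_ge0 => //; apply: ltW.
Qed.

Lemma prod_ind (R : realFieldType) (k : nat) (P : 'I_k -> bool) :
  \prod_(i < k) (P i)%:R = [forall i, P i]%:R :> R.
Proof.
case: (boolP [forall i, P i]) => h.
  by rewrite big1 // => i _; rewrite (forallP h i).
by move/forallPn: h => [i0 hi0]; rewrite (bigD1 i0) //= (negbTE hi0) mul0r.
Qed.

Lemma sum_w_ind (R : realFieldType) (C : finType) (k : nat) (p : C -> R) (P : pred C) :
  \sum_(f : {ffun 'I_k -> C}) (\prod_i p (f i)) * [forall i, P (f i)]%:R
  = (\sum_c p c * (P c)%:R) ^+ k.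
Proof.
rewrite -[in RHS](card_ord k) -prodr_const bigA_distr_bigA.
apply: eq_bigr => f _; rewrite big_split /=; congr (_ * _).
by rewrite (@prod_ind R k (fun i => P (f i))).
Qed.

Lemma best_identity (R : realFieldType) (C : finType) (lt : rel C) (p : C -> R) (psi : R -> R)
  (k : nat) (f : {ffun 'I_k -> C}) :
  strict_linear_order lt -> (0 < k)%N ->
  psi (\sum_c p c * (prefers_to_all lt c (f @: [set: 'I_k]))%:R)
  = \sum_b psi (\sum_(c | lt c b) p c) *
        ([forall i, ~~ lt (f i) b]%:R - [forall i, lt b (f i)]%:R).
Proof.
move=> [irr tr tot] k0.
set S := f @: [set: 'I_k].
have S0 : (0 < #|S|)%N.
  by apply/card_gt0P; exists (f (Ordinal k0)); apply/imsetP; exists (Ordinal k0).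
have [s Hs Hmin] := exists_min irr tr S0.
have [i0 _ Hi0] := imsetP Hs.
have fS : forall i, f i \in S by move=> i; apply/imsetP; exists i.
have above : forall b, b \in S -> b != s -> lt s b.
  move=> b hb hbs; have := tot _ _ hbs; have := Hmin b hb.
  by case: (lt b s).
have HL : \sum_c p c * (prefers_to_all lt c S)%:R = \sum_(c | lt c s) p c.
  rewrite [RHS]big_mkcond /=; apply: eq_bigr => c _.
  have -> : prefers_to_all lt c S = lt c s.
    apply/forall_inP/idP => [h|h b hb]; first exact: h.
    case: (eqVneq b s) => [->|hbs] //; exact: tr h (above b hb hbs).
  by case: (lt c s); rewrite ?mulr1 ?mulr0.
rewrite HL [RHS](bigD1 s) //= [X in _ = _ + X]big1 ?addr0.
  have -> : [forall i, ~~ lt (f i) s] by apply/forallP => i; apply: Hmin.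
  have -> : [forall i, lt s (f i)] = false.
    by apply/negbTE/forallPn; exists i0; rewrite -Hi0 irr.
  by rewrite subr0 mulr1.
move=> b hbs.
case hbs': (lt b s).
  have -> : [forall i, ~~ lt (f i) b].
    apply/forallP => i; apply/negP => h; have := Hmin _ (fS i); by rewrite (tr _ _ _ h hbs').
  have -> : [forall i, lt b (f i)].
    apply/forallP => i; case: (eqVneq (f i) s) => [->|hne] //.
    exact: tr hbs' (above _ (fS i) hne).
  by rewrite subrr mulr0.
have hsb : lt s b.
  by move: (tot _ _ hbs); rewrite hbs' /=.
have -> : [forall i, ~~ lt (f i) b] = false.
  by apply/negbTE/forallPn; exists i0; rewrite -Hi0 hsb.
have -> : [forall i, lt b (f i)] = false.
  by apply/negbTE/forallPn; exists i0; rewrite -Hi0 hbs'.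
by rewrite subrr mulr0.
Qed.

Lemma expect_voter (R : realFieldType) (C : finType) (lt : rel C) (p : C -> R) (k : nat) (d : R) :
  strict_linear_order lt -> (forall c, 0 <= p c) -> \sum_c p c = 1 -> (0 < k)%N ->
  0 <= d -> d <= 1 ->
  \sum_(f : {ffun 'I_k -> C}) (\prod_i p (f i)) *
     Num.max (\sum_c p c * (prefers_to_all lt c (f @: [set: 'I_k]))%:R - (1 - d)) 0
  <= d ^+ k.+1 / k.+1%:R.
Proof.
move=> slo p0 p1 k0 d0 d1.
have [irr tr tot] := slo.
pose psi u := Num.max (u - (1 - d)) 0.
pose A b := \sum_(c | lt c b) p c.
pose a b := \sum_(c | ~~ lt c b) p c.
pose be b := \sum_(c | lt b c) p c.
have Aa : forall b, A b = 1 - a b.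
  by move=> b; rewrite -p1 (bigID (fun c => lt c b)) /= addrK.
have abe : forall b, a b = be b + p b.
  move=> b; rewrite /a (bigD1 b) /=; last by rewrite irr.
  rewrite addrC; congr (_ + _).
  apply: eq_bigl => c; case: (eqVneq c b) => [->|hcb] /=; first by rewrite irr andbF.
  rewrite andbT.
  move: (tot _ _ hcb); case h1: (lt c b); case h2: (lt b c) => //=.
  by have := tr _ _ _ h1 h2; rewrite irr.
have step1 : \sum_(f : {ffun 'I_k -> C}) (\prod_i p (f i)) *
     psi (\sum_c p c * (prefers_to_all lt c (f @: [set: 'I_k]))%:R)
   = \sum_b psi (A b) * (a b ^+ k - be b ^+ k).
  under eq_bigr => f _ do rewrite (best_identity p psi f slo k0) mulr_sumr.
  rewrite exchange_big /=; apply: eq_bigr => b _.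
  under eq_bigr => f _ do rewrite mulrCA mulrBr.
  rewrite -mulr_sumr sumrB (@sum_w_ind R C k p (fun c => ~~ lt c b)) (@sum_w_ind R C k p (fun c => lt b c)).
  congr (_ * (_ ^+ k - _ ^+ k)).
    by rewrite /a [RHS]big_mkcond /=; apply: eq_bigr => c _; case: (lt c b); rewrite ?mulr1 ?mulr0.
  by rewrite /be [RHS]big_mkcond /=; apply: eq_bigr => c _; case: (lt b c); rewrite ?mulr1 ?mulr0.
change (\sum_(f : {ffun 'I_k -> C}) (\prod_i p (f i)) *
     psi (\sum_c p c * (prefers_to_all lt c (f @: [set: 'I_k]))%:R) <= d ^+ k.+1 / k.+1%:R).
rewrite step1.
have be0 : forall b, 0 <= be b by move=> b; apply: sumr_ge0 => c _.
have step2 : \sum_b psi (A b) * (a b ^+ k - be b ^+ k) <= \sum_b (Hf k d (be b) - Hf k d (be b + p b)).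
  apply: ler_sum => b _.
  have -> : psi (A b) = Num.max (d - a b) 0 by rewrite /psi Aa; congr (Num.max _ _); ring.
  rewrite -abe; apply: per_b => //.
  by rewrite abe lerDl.
apply: (le_trans step2).
have tot' : forall x y, x != y -> lt y x || lt x y by move=> x y h; rewrite orbC; apply: tot.
have tel := @telescope_set R C (fun x y => lt y x) p (fun u => - Hf k d u) irr
   (fun x y z h1 h2 => tr _ _ _ h2 h1) tot' [set: C].
have E : \sum_b (Hf k d (be b) - Hf k d (be b + p b)) = Hf k d 0 - Hf k d 1.
  rewrite -p1.
  have -> : \sum_c p c = \sum_(c in [set: C]) p c by apply: eq_bigl => c; rewrite finset.in_setT.
  move: tel => /= tel.
  set T1 := (X in X = _) in tel.
  have -> : \sum_b (Hf k d (be b) - Hf k d (be b + p b)) = T1.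
    rewrite /T1.
    apply: eq_big => [b|b _]; first by rewrite finset.in_setT.
    have -> : \sum_(c in [set: C] | lt b c) p c = be b by apply: eq_bigl => c; rewrite finset.in_setT.
    by rewrite opprK addrC.
  rewrite tel; lra.
rewrite E /Hf.
have -> : Num.min 1 d = d by apply/min_idPr.
have -> : Num.min 0 d = 0 by apply/min_idPl.
rewrite hpol_dd subr0 /hpol expr0n (negbTE (lt0n_neq0 k0)) expr0n /=.
by rewrite mulr0 subr0 mulr0 mul0r addr0.
Qed.

Lemma subset_card (T : finType) (A : {set T}) (m : nat) :
  (m <= #|A|)%N -> exists B : {set T}, B \subset A /\ #|B| = m.
Proof.
elim: m => [|m IH] hm.
  by exists finset.set0; rewrite finset.sub0set cards0.
have [B [BA cB]] := IH (ltnW hm).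
have : ~~ (A \subset B).
  apply/negP => AB; have := subset_leq_card AB; rewrite cB leqNgt hm //.
case/subsetPn => x xA xB.
exists (x |: B); split.
  by rewrite finset.subUset finset.sub1set xA BA.
by rewrite cardsU1 xB cB.
Qed.

Lemma pad_set (T : finType) (S0 : {set T}) (k : nat) :
  (#|S0| <= k)%N -> (k <= #|T|)%N -> exists S : {set T}, S0 \subset S /\ #|S| = k.
Proof.
move=> h1 h2.
have h3 : (k - #|S0| <= #|~: S0|)%N.
  have -> : #|~: S0| = (#|T| - #|S0|)%N by rewrite -(cardsC S0) addKn.
  by rewrite leq_sub2r.
have [B [BC cB]] := subset_card h3.
exists (S0 :|: B); split; first exact: finset.subsetUl.
rewrite cardsU cB.
have -> : S0 :&: B = finset.set0.
  apply/setP => y; rewrite !inE; apply/negbTE/negP => /andP [y1 y2].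
  by have := fintype.subsetP BC y y2; rewrite inE y1.
by rewrite cards0 subn0 subnKC.
Qed.

Lemma pta_mono (C : finType) (lt : rel C) (a : C) (S0 S : {set C}) :
  S0 \subset S -> prefers_to_all lt a S -> prefers_to_all lt a S0.
Proof.
move=> sub /forall_inP h; apply/forall_inP => b hb; apply: h.
exact: (fintype.subsetP sub).
Qed.

Lemma alpha_one_case (R : realType) (k : nat) (V C : finType) (pref : V -> rel C) :
  (0 < k)%N -> (0 < #|V|)%N -> (k <= #|C|)%N -> election pref ->
  exists S : {set C}, #|S| = k /\ @undominated R V C pref 1 S.
Proof.
move=> k0 hV hk el.
have [v0 _] : exists v0 : V, true by move/card_gt0P: hV => [v0 _]; exists v0.
have [irr tr tot] := el v0.
have C0 : (0 < #|[set: C]|)%N by rewrite cardsT; apply: leq_trans k0 hk.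
have [b0 _ Hb0] := exists_min irr tr C0.
have c1 : (#|[set b0]| <= k)%N by rewrite cards1.
have [S [S0 cS]] := @pad_set C [set b0] k c1 hk.
exists S; split => // a.
rewrite /dom_frac.
have N0 : 0 < #|V|%:R :> R by rewrite ltr0n.
rewrite ltr_pdivrMr // mul1r ltr_nat.
have sub : [set v | prefers_to_all (pref v) a S] \subset ~: [set v0].
  apply/fintype.subsetP => v; rewrite !inE => h; apply/eqP => ev.
  move: h; rewrite ev => /forall_inP h.
  have hb0 : b0 \in S by apply: (fintype.subsetP S0); rewrite inE.
  by have := Hb0 a (finset.in_setT a); rewrite h.
have := subset_leq_card sub; rewrite cardsC1 => h.
apply: (leq_trans (n := #|V|.-1.+1)); first by rewrite ltnS.
by rewrite prednK.
Qed.

Lemma key_real (R : realType) (k : nat) (alpha : R) :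
  (0 < k)%N -> 0 < alpha -> alpha < 1 ->
  alpha / (1 - ln alpha) >= 2 / (k.+1)%:R ->
  let x := expR (ln alpha / k%:R) in
  [/\ 0 < x, x < 1, x ^+ k = alpha &
      alpha * (1 - x) + x ^+ k.+1 / k.+1%:R < alpha ^+ 2 / 2].
Proof.
move=> k0 a0 a1 hyp x.
have K0 : 0 < k%:R :> R by rewrite ltr0n.
have K1 : 0 < k.+1%:R :> R by rewrite ltr0n.
have la : ln alpha < 0 by apply: ln_lt0; rewrite a0 a1.
pose y := ln alpha / k%:R.
have y0 : y < 0 by rewrite /y pmulr_llt0 ?invr_gt0.
have x0 : 0 < x by apply: expR_gt0.
have x1 : x < 1 by rewrite /x expR_lt1.
have xk : x ^+ k = alpha.
  rewrite /x -expRM_natl mulrC -mulrA mulVf ?mulr1 ?gt_eqF //.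
  by rewrite lnK // posrE.
have yx : y < x - 1.
  have := @expR_gt1Dx R y (negbT (lt_eqF y0)); rewrite -/y -/x; lra.
have ky : ln alpha = k%:R * y by rewrite /y; field; rewrite gt_eqF.
have hyp' : 2 * (1 - ln alpha) <= k.+1%:R * alpha.
  have L0 : 0 < 1 - ln alpha by lra.
  by move: hyp; rewrite ler_pdivlMr // mulrAC ler_pdivrMr // [alpha * _]mulrC.
split => //.
rewrite exprS xk.
have h1 : k.+1%:R - k%:R * x < k.+1%:R * alpha / 2.
  have : k%:R * y < k%:R * (x - 1) by rewrite ltr_pM2l.
  move: hyp'; rewrite ky -[k.+1%:R]natr1.
  rewrite mulrBr mulr1 !mulrDl mul1r.
  lra.
have h2 : (1 - x) + x / k.+1%:R < alpha / 2.
  have -> : (1 - x) + x / k.+1%:R = (k.+1%:R - k%:R * x) / k.+1%:R.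
    by rewrite -[k.+1%:R]natr1; field; rewrite natr1 gt_eqF.
  rewrite ltr_pdivrMr //; lra.
have : alpha * ((1 - x) + x / k.+1%:R) < alpha * (alpha / 2) by rewrite ltr_pM2l.
have -> : alpha * (1 - x + x / k.+1%:R) = alpha * (1 - x) + x * alpha / k.+1%:R.
  by rewrite mulrDr mulrA [alpha * x]mulrC.
by rewrite expr2 mulrA.
Qed.

Lemma final_real (R : realFieldType) (N T alpha c G : R) :
  0 < N -> alpha * N <= T -> 0 < alpha -> 0 <= G -> alpha * c + G < alpha ^+ 2 / 2 ->
  T * c + N * G < T ^+ 2 / (2 * N).
Proof.
move=> N0 hT a0 G0 h.
have ca : c < alpha / 2.
  have : alpha * c < alpha * (alpha / 2) by rewrite mulrA -expr2; lra.
  by rewrite ltr_pM2l.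
rewrite ltr_pdivlMr ?mulr_gt0 //.
pose e := T - alpha * N.
have e0 : 0 <= e by rewrite /e subr_ge0.
have -> : T = alpha * N + e by rewrite /e addrC subrK.
have h' : 2 * alpha * c + 2 * G < alpha ^+ 2 by lra.
have : 0 <= e * (alpha - c) by apply: mulr_ge0 => //; lra.
have : N ^+ 2 * (2 * alpha * c + 2 * G) < N ^+ 2 * alpha ^+ 2.
  by rewrite ltr_pM2l // exprn_gt0.
have : 0 <= e * e by apply: mulr_ge0.
have : 0 <= N * (e * (alpha - c)) by apply: mulr_ge0; [apply: ltW|apply: mulr_ge0 => //; lra].
nra.
Qed.

Lemma q_lower (R : realFieldType) (C : finType) (lt : rel C) (p : C -> R) (a : C) (S : {set C}) :
  strict_linear_order lt -> (forall c, 0 <= p c) -> \sum_c p c = 1 ->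
  prefers_to_all lt a S ->
  1 - \sum_b p b * (prefers_to_all lt b S)%:R <= \sum_b p b * (lt a b)%:R.
Proof.
move=> [irr tr tot] p0 p1 /forall_inP ha.
rewrite -{1}p1 -sumrB; apply: ler_sum => b _.
case hb: (prefers_to_all lt b S); first by rewrite mulr1 subrr mulr_ge0 // ler0n.
rewrite mulr0 subr0.
have : lt a b.
  move/negbT: hb; case/forall_inPn => s sS hbs.
  have las := ha s sS.
  case: (eqVneq b s) => [->//|hne].
  by move: (tot _ _ hne); rewrite (negbTE hbs) /= => hsb; apply: tr las hsb.
by move=> ->; rewrite mulr1.
Qed.

Unset Implicit Arguments.

Theorem theorem1 (R : realType) (k : nat) (alpha : R)
    (V C : finType) (pref : V -> rel C) :
  (0 < k)%N -> 0 < alpha -> alpha <= 1 ->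
  alpha / (1 - ln alpha) >= 2 / (k.+1)%:R ->
  (0 < #|V|)%N -> (k <= #|C|)%N ->
  election pref ->
  exists S : {set C}, #|S| = k /\ @undominated R V C pref alpha S.
Proof.
move=> k0 a0 a1 hyp hV hk el.
case: (eqVneq alpha 1) => [->|an1].
  exact: (@alpha_one_case R k V C pref k0 hV hk el).
have alt1 : alpha < 1 by rewrite lt_neqAle an1 a1.
have [x0 x1 xk key] := key_real k0 a0 alt1 hyp.
set x := expR (ln alpha / k%:R) in x0 x1 xk key.
pose N : R := #|V|%:R.
have N0 : 0 < N by rewrite ltr0n.
have [c0 _] : exists c0 : C, true.
  have : (0 < #|C|)%N by apply: leq_trans k0 hk.
  by move/card_gt0P => [c0 _]; exists c0.
have exT : exists t, alpha * N <= t%:R.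
  by exists #|V|; rewrite -/N ler_piMl // ltW.
case: (ex_minnP exT) => t ht tmin.
have [p [p0 p1 pT]] := @frac_lemma R V C pref t c0 el hV.
pose psi v (S : {set C}) := Num.max (\sum_c p c * (prefers_to_all (pref v) c S)%:R - (1 - x)) 0.
pose Phi (f : {ffun 'I_k -> C}) := \sum_v psi v (f @: [set: 'I_k]).
pose w (f : {ffun 'I_k -> C}) := \prod_i p (f i).
have w0 : forall f, 0 <= w f by move=> f; apply: prodr_ge0 => i _.
have w1 : \sum_f w f = 1.
  rewrite /w -(bigA_distr_bigA (fun (i : 'I_k) c => p c)) /=.
  by rewrite big1 // => i _.
have EPhi : \sum_f w f * Phi f <= N * (x ^+ k.+1 / k.+1%:R).
  under eq_bigr => f _ do rewrite /Phi mulr_sumr.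
  rewrite exchange_big /=.
  have -> : N * (x ^+ k.+1 / k.+1%:R) = \sum_(v : V) (x ^+ k.+1 / k.+1%:R).
    by rewrite sumr_const /N mulr_natl.
  apply: ler_sum => v _.
  have := @expect_voter R C (pref v) p k x (el v) p0 p1 k0 (ltW x0) (ltW x1).
  by apply: le_trans; apply: lexx.
have [fs _ Hfs] := arg_minP Phi (isT : xpredT [ffun _ => c0]).
have Phifs : Phi fs <= N * (x ^+ k.+1 / k.+1%:R).
  apply: le_trans EPhi.
  rewrite -[Phi fs]mul1r -w1 mulr_suml; apply: ler_sum => f _.
  by apply: ler_wpM2l => //; apply: Hfs.
pose S0 := fs @: [set: 'I_k].
have cS0 : (#|S0| <= k)%N.
  by apply: leq_trans (leq_imset_card _ _) _; rewrite cardsT card_ord.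
have [S [S0S cS]] := pad_set cS0 hk.
exists S; split => // a.
rewrite /dom_frac ltNge; apply/negP => hge.
set X := [set v | prefers_to_all (pref v) a S] in hge.
have hX : alpha * N <= #|X|%:R by move: hge; rewrite ler_pdivlMr.
have tX : (t <= #|X|)%N by apply: tmin.
have [T [TX cT]] := subset_card tX.
have up := pT a T cT.
have low : t%:R * x - Phi fs <= \sum_(v in T) \sum_b p b * (pref v a b)%:R.
  have psi0 : forall v, 0 <= psi v S0 by move=> v; rewrite /psi le_max lexx orbT.
  have h1 : \sum_(v in T) psi v S0 <= Phi fs.
    rewrite /Phi -/S0 [X in _ <= X](bigID (fun v => v \in T)) /= lerDl.
    by apply: sumr_ge0 => v _.
  have h2 : t%:R * x - \sum_(v in T) psi v S0 <= \sum_(v in T) \sum_b p b * (pref v a b)%:R.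
    rewrite -cT -sum1_card natr_sum mulr_suml -sumrB; apply: ler_sum => v vT.
    have vX : v \in X by apply: (fintype.subsetP TX).
    have pa : prefers_to_all (pref v) a S0.
      by apply: pta_mono S0S _; move: vX; rewrite inE.
    have := q_lower (el v) p0 p1 pa.
    have : \sum_b p b * (prefers_to_all (pref v) b S0)%:R - (1 - x) <= psi v S0.
      by rewrite /psi le_max lexx.
    rewrite mul1r; lra.
  lra.
have G0 : 0 <= x ^+ k.+1 / k.+1%:R by apply: divr_ge0; [apply: exprn_ge0; apply: ltW|rewrite ler0n].
have := @final_real R N t%:R alpha (1 - x) (x ^+ k.+1 / k.+1%:R) N0 ht a0 G0 key.
have : t%:R ^+ 2 / (2 * N) <= t%:R * (1 - x) + N * (x ^+ k.+1 / k.+1%:R).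
  move: up low Phifs; rewrite -/N; set Q := \sum_(v in T) _.
  move: (t%:R ^+ 2 / (2 * N)) (Phi fs) (N * (x ^+ k.+1 / k.+1%:R)) => A B D.
  rewrite mulrBr mulr1; lra.
move=> h1 h2; have := lt_le_trans h2 h1; by rewrite ltxx.
Qed.
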